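(* Let $r=[r_0,\ldots,r_m]$ and $c=[c_0,\ldots,c_n]$ be strictly increasing sequences of nonnegative integers with $r_0\le c_n$, and let $\{\hat r,\hat c\}$ be an ordered sub-pair of $\{r,c\}$ of length $p+1\ge 1$, $\hat c=[\hat c_0,\ldots,\hat c_p]$. Let $A$ be the $(m+1)\times(p+1)$ real matrix with entries $$A_{i,j}=\frac{1}{r_i!}\,\frac{d^{r_i}}{dx^{r_i}}\big(x^{\hat c_j}\big)\Big|_{x=1},\qquad 0\le i\le m,\ 0\le j\le p.$$ Then $A$ has full column rank $p+1$.
   Context: A pair $\{\hat r,\hat c\}$ is an ordered sub-pair of $\{r,c\}$ of length $p+1$ if $\hat r=[\hat r_0,\ldots,\hat r_p]$ is a subsequence of $r$, $\hat c=[\hat c_0,\ldots,\hat c_p]$ is a subsequence of $c$, and $\hat r_i\le \hat c_i$ for all $i=0,\ldots,p$. (Note $A_{i,j}=\binom{\hat c_j}{r_i}$, with $\binom{a}{b}:=0$ for $b>a$.) *)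

(* Defs.v *)
From HB Require Import structures.
From mathcomp Require Import all_boot all_order all_algebra.
Set Implicit Arguments. Unset Strict Implicit. Unset Printing Implicit Defensive.
Import Order.TTheory GRing.Theory Num.Theory.

Definition ordered_subpair (r c rh ch : seq nat) (p : nat) : Prop :=
  [/\ subseq rh r, subseq ch c, size rh = p.+1, size ch = p.+1 &
      forall i, i < p.+1 -> nth 0 rh i <= nth 0 ch i].

Definition derivA (R : realFieldType) (m p : nat) (r ch : seq nat)
  : 'M[R]_(m.+1, p.+1) :=
  \matrix_(i < m.+1, j < p.+1)
    ((((('X ^+ (nth 0 ch j) : {poly R}) ^`(nth 0 r i)).[1]) / ((nth 0 r i)`!)%:R))%R.

(* Main.v *)
Require Import Defs.
From HB Require Import structures.
From mathcomp Require Import all_boot all_order all_algebra zify.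
Import Order.TTheory GRing.Theory Num.Theory.
Local Open Scope ring_scope.

Definition inc (n : nat) (f : nat -> nat) := forall i, (i.+1 < n)%N -> (f i < f i.+1)%N.

Lemma inc_lt n f : inc n f -> forall i j, (i < j)%N -> (j < n)%N -> (f i < f j)%N.
Proof.
move=> H i j lij; elim: j lij => [//|j IH] lij ljn.
rewrite ltnS leq_eqVlt in lij; case/orP: lij => [/eqP->|lij].
  by apply: H.
by apply: ltn_trans (IH lij (ltnW ljn)) (H _ ljn).
Qed.

Lemma bin_diff (c c' K : nat) : (c <= c')%N ->
  'C(c', K.+1) = ('C(c, K.+1) + \sum_(c <= t < c') 'C(t, K))%N.
Proof.
elim: c' => [|c' IH]; first by rewrite leqn0 => /eqP->; rewrite big_geq // addn0.
rewrite leq_eqVlt => /orP[/eqP<-|]; first by rewrite big_geq // addn0.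
by rewrite ltnS => le; rewrite big_nat_recr //= binS IH // -addnA.
Qed.

Definition PM (R : realFieldType) n (k c : nat -> nat) : 'M[R]_n :=
  \matrix_(j < n, i < n) ('C(c j, k i))%:R.
Definition IM (R : realFieldType) n (k a b : nat -> nat) : 'M[R]_n :=
  \matrix_(j < n, i < n) \sum_(a j <= t < b j) ('C(t, k i))%:R.
Definition okI p (a b : nat -> nat) :=
  (forall j, (j < p)%N -> (a j < b j)%N) /\ (forall j, (j.+1 < p)%N -> (b j <= a j.+1)%N).
Definition msr p (a b : nat -> nat) := (\sum_(j < p) (b j - a j - 1))%N.

Lemma msr_lt p (a b a' b' : nat -> nat) (j : 'I_p) :
  (b' j - a' j - 1 < b j - a j - 1)%N ->
  (forall l : 'I_p, l != j -> b' l - a' l - 1 = b l - a l - 1)%N ->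
  (msr p a' b' < msr p a b)%N.
Proof.
move=> lt eq; rewrite /msr (bigD1 j) //= [X in (_ < X)%N](bigD1 j) //=.
rewrite (eq_bigr (fun l : 'I_p => b l - a l - 1)%N); last by move=> l /eq ->.
by rewrite ltn_add2r.
Qed.

Lemma IM_base (R : realFieldType) p k a b : okI p a b ->
  (forall j : 'I_p, ~~ ((a j).+1 < b j)%N) ->
  IM R p k a b = PM R p k (fun j => (b j).-1).
Proof.
move=> [Hab _] H; apply/matrixP => j i; rewrite !mxE.
have e : b j = (a j).+1.
  by have := Hab j (ltn_ord j); have := H j; lia.
by rewrite e big_nat1.
Qed.

Lemma IM_lemma (R : realFieldType) p k :
  (forall c, inc p c -> 0 <= \det (PM R p k c)) ->
  forall mu a b, okI p a b -> (msr p a b <= mu)%N ->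
  0 <= \det (IM R p k a b) /\
  \det (PM R p k (fun j => (b j).-1)) <= \det (IM R p k a b).
Proof.
move=> Hk mu; elim: mu => [|mu IH] a b Hok Hm.
  case: (boolP [exists j : 'I_p, ((a j).+1 < b j)%N]) => [/existsP [j Hj]|].
    exfalso; have : (b j - a j - 1 <= msr p a b)%N.
      by rewrite /msr (bigD1 j) //= leq_addr.
    lia.
  rewrite negb_exists => /forallP H.
  rewrite IM_base //; split => //; apply: Hk => i hi.
  case: Hok => Hab Hba; have := Hab i (ltnW hi); have := Hba i hi;
  have := Hab i.+1 hi; lia.
case: (boolP [exists j : 'I_p, ((a j).+1 < b j)%N]) => [/existsP [j Hj]|]; last first.
  rewrite negb_exists => /forallP H.
  rewrite IM_base //; split => //; apply: Hk => i hi.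
  case: Hok => Hab Hba; have := Hab i (ltnW hi); have := Hba i hi;
  have := Hab i.+1 hi; lia.
case: Hok => Hab Hba.
pose b1 := fun l => if l == (j : nat) then (a j).+1 else b l.
pose a2 := fun l => if l == (j : nat) then (a j).+1 else a l.
have Hdet : \det (IM R p k a b) = 1 * \det (IM R p k a b1) + 1 * \det (IM R p k a2 b).
  apply: (determinant_multilinear (i0 := j)).
  - apply/rowP => i; rewrite !mxE /b1 /a2 eqxx big_ltn ?mul1r ?big_nat1 //; lia.
  - apply/matrixP => l i; rewrite !mxE /b1.
    case: eqP => // e; have e' : lift j l = j by apply: val_inj.
    by have := neq_lift j l; rewrite e' eqxx.
  - apply/matrixP => l i; rewrite !mxE /a2.
    case: eqP => // e; have e' : lift j l = j by apply: val_inj.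
    by have := neq_lift j l; rewrite e' eqxx.
have ok1 : okI p a b1.
  split => l hl; rewrite /b1; case: eqP => [e|_].
  - subst l; lia.
  - exact: Hab.
  - subst l; have := Hba _ hl; lia.
  - exact: Hba.
have ok2 : okI p a2 b.
  split => l hl; rewrite /a2.
  - case: eqP => [e|_]; [subst l; lia | exact: Hab].
  - case: eqP => [el|_]; first by (have := Hba l hl; rewrite el; lia).
    exact: Hba.
have m1 : (msr p a b1 <= mu)%N.
  rewrite -ltnS; apply: leq_trans Hm; apply: (@msr_lt p _ _ _ _ j).
    rewrite /b1 eqxx; lia.
  by move=> l /negbTE ne; rewrite /b1 (_ : ((l:nat) == (j:nat)) = false).
have m2 : (msr p a2 b <= mu)%N.
  rewrite -ltnS; apply: leq_trans Hm; apply: (@msr_lt p _ _ _ _ j).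
    rewrite /a2 eqxx; lia.
  by move=> l /negbTE ne; rewrite /a2 (_ : ((l:nat) == (j:nat)) = false).
have [P1 _] := IH _ _ ok1 m1.
have [P2 Q2] := IH _ _ ok2 m2.
rewrite Hdet !mul1r; split; first exact: addr_ge0.
by rewrite -[X in X <= _]add0r lerD.
Qed.

Lemma step0 (R : realFieldType) p k c : k 0%N = 0%N -> inc p.+1 k -> inc p.+1 c ->
  \det (PM R p.+1 k c) = \det (IM R p (fun i => (k i.+1).-1) c (fun j => c j.+1)).
Proof.
move=> k0 Hk Hc.
set P := PM R p.+1 k c.
pose S : 'M[R]_p.+1 := \matrix_(j, l) ((j : nat) == (l : nat).+1)%:R.
pose L : 'M[R]_p.+1 := 1 - S.
have dL : \det L = 1.
  rewrite det_trig; last first.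
    apply/is_trig_mxP => i j lij; rewrite !mxE.
    rewrite (_ : (i == j) = false); last by apply/negbTE; rewrite neq_ltn lij.
    rewrite (_ : ((i:nat) == j.+1) = false) ?subr0 //; lia.
  apply: big1 => i _; rewrite !mxE eqxx (_ : ((i:nat) == i.+1) = false) ?subr0 //; lia.
have SP : forall j i, (S *m P) j i = if (j : nat) == 0%N then 0 else P (inord j.-1) i.
  move=> j i; rewrite !mxE; case: eqP => [j0|jn0].
    by apply: big1 => l _; rewrite !mxE j0 mul0r.
  rewrite (bigD1 (inord j.-1)) //= big1 ?addr0; last first.
    move=> l ne; rewrite !mxE (_ : ((j:nat) == l.+1) = false) ?mul0r //.
    apply/negbTE; apply: contra ne => /eqP e; apply/eqP; apply: val_inj.
    by rewrite /= e inordK //= ltnW.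
  rewrite !mxE inordK; last by have := ltn_ord j; lia.
  rewrite (_ : ((j:nat) == (j.-1).+1) = true) ?mul1r //; lia.
have dQ : \det P = \det (L *m P) by rewrite det_mulmx dL mul1r.
set Q := L *m P in dQ.
have QE : forall j i, Q j i = P j i - (if (j : nat) == 0%N then 0 else P (inord j.-1) i).
  by move=> j i; rewrite /Q /L mulmxBl mul1mx -SP !mxE.
clearbody Q.
rewrite dQ -(@submxK _ 1%N p 1%N p Q).
rewrite (_ : dlsubmx (Q : 'M_(1 + p)) = 0); last first.
  apply/matrixP => j i; rewrite !mxE QE /= !mxE.
  rewrite (_ : lshift p i = ord0 :> 'I_(1+p)); last by apply: val_inj => /=; case: i => [[]].
  by rewrite k0 !bin0 subrr.
rewrite (@det_ublock R 1%N p) det_mx11.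
rewrite (_ : ulsubmx (Q : 'M_(1 + p)) 0 0 = 1); last first.
  by rewrite !mxE QE /= !mxE /= k0 bin0 subr0.
rewrite mul1r; congr (\det _); apply/matrixP => j i.
rewrite !mxE QE /= !mxE /= !add1n inordK; last by have := ltn_ord j; lia.
have ki : (0 < k i.+1)%N by rewrite -k0; apply: (@inc_lt _ _ Hk 0 i.+1) => //; rewrite ltnS.
have cj : (c j <= c j.+1)%N by apply: ltnW; apply: Hc; rewrite ltnS.
rewrite add0n [in LHS](_ : k i.+1 = ((k i.+1).-1).+1); last by rewrite prednK.
rewrite (bin_diff _ _ _ cj) natrD addrAC subrr add0r natr_sum /=.
by [].
Qed.

Lemma stepS (R : realFieldType) n k c : (0 < k 0%N)%N -> (0 < c 0%N)%N -> inc n k -> inc n c ->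
  \det (PM R n k c) = (\prod_(j < n) (c j)%:R) * \det (PM R n (fun i => (k i).-1) (fun j => (c j).-1))
     * \prod_(i < n) ((k i)%:R)^-1.
Proof.
move=> k0 c0 Hk Hc.
have kp : forall i, (i < n)%N -> (0 < k i)%N.
  move=> [|i] hi //; apply: leq_trans k0 _; apply: ltnW; exact: (@inc_lt _ _ Hk 0 i.+1).
have cp : forall i, (i < n)%N -> (0 < c i)%N.
  move=> [|i] hi //; apply: leq_trans c0 _; apply: ltnW; exact: (@inc_lt _ _ Hc 0 i.+1).
have -> : PM R n k c = diag_mx (\row_j (c j)%:R) *m PM R n (fun i => (k i).-1) (fun j => (c j).-1)
   *m diag_mx (\row_i ((k i)%:R)^-1).
  apply/matrixP => j i; rewrite mul_mx_diag mul_diag_mx !mxE.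
  have e := mul_bin_diag (c j) (k i).-1.
  rewrite prednK ?kp // in e.
  rewrite -natrM e natrM mulrC mulrA mulVf ?mul1r //.
  by rewrite pnatr_eq0 -lt0n kp.
by rewrite !det_mulmx !det_diag; congr (_ * _ * _); apply: eq_bigr => i _; rewrite mxE.
Qed.

Lemma PM_main (R : realFieldType) n : forall k c, inc n k -> inc n c ->
  0 <= \det (PM R n k c) /\
  ((forall i, (i < n)%N -> (k i <= c i)%N) -> 0 < \det (PM R n k c)).
Proof.
elim: n => [|p IHp] k c Hk Hc.
  by rewrite det_mx00; split => // _; apply: ltr01.
move Em : (k 0%N) => m; elim: m k c Em Hk Hc => [|m IHm] k c k0 Hk Hc.
  rewrite step0 //.
  have Hk' : inc p (fun i => (k i.+1).-1).
    move=> i hi; have := Hk i.+1 hi.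
    have : (k 0%N < k i.+1)%N by apply: (@inc_lt _ _ Hk 0 i.+1) => //; apply: ltnW.
    lia.
  have ok : okI p c (fun j => c j.+1).
    by split => j hj //; apply: Hc.
  have [Hn Hl] := @IM_lemma R p _ (fun c' Hc' => (IHp _ c' Hk' Hc').1) _ _ _ ok (leqnn _).
  split => // Hkc; apply: lt_le_trans Hl.
  have Hc' : inc p (fun j => (c j.+1).-1).
    move=> i hi; have := Hc i.+1 hi; have := Hc i (ltnW hi); lia.
  apply: (IHp _ _ Hk' Hc').2 => i hi.
  have := Hkc i.+1 hi; lia.
case: (posnP (c 0%N)) => c0.
  have d0 : \det (PM R p.+1 k c) = 0.
    rewrite (expand_det_row _ ord0); apply: big1 => i _.
    rewrite !mxE /= c0 bin0n.
    have : (0 < k i)%N.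
      case: i => [[|i] hi] /=; first by rewrite k0.
      apply: leq_trans (_ : (k 0%N < k i.+1)%N); first by rewrite k0.
      exact: (@inc_lt _ _ Hk 0 i.+1).
    by move=> /lt0n_neq0 /negbTE ->; rewrite mul0r.
  rewrite d0; split => // /(_ 0%N isT); rewrite k0 c0.
  by [].
rewrite stepS ?k0 //.
have Hk' : inc p.+1 (fun i => (k i).-1).
  move=> i hi; have := Hk i hi.
  have : (k 0%N <= k i)%N.
    case: i hi => // i hi; apply: ltnW; apply: (@inc_lt _ _ Hk 0 i.+1) => //; exact: ltnW.
  lia.
have Hc' : inc p.+1 (fun i => (c i).-1).
  move=> i hi; have := Hc i hi.
  have : (c 0%N <= c i)%N.
    case: i hi => // i hi; apply: ltnW; apply: (@inc_lt _ _ Hc 0 i.+1) => //; exact: ltnW.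
  lia.
have km : (fun i => (k i).-1) 0%N = m by rewrite /= k0.
have [H1 H2] := IHm _ _ km Hk' Hc'.
have P1 : 0 < \prod_(j < p.+1) ((c j)%:R : R).
  apply: prodr_gt0 => j _; rewrite ltr0n.
  case: j => [[|j] hj] //=; apply: leq_trans c0 _; apply: ltnW; exact: (@inc_lt _ _ Hc 0 j.+1).
have P2 : 0 < \prod_(i < p.+1) ((k i)%:R : R)^-1.
  apply: prodr_gt0 => j _; rewrite invr_gt0 ltr0n.
  case: j => [[|j] hj] //=; first by rewrite k0.
  apply: leq_trans (_ : (k 0%N < k j.+1)%N); first by rewrite k0.
  exact: (@inc_lt _ _ Hk 0 j.+1).
split.
  by apply: mulr_ge0; [apply: mulr_ge0 => //; apply: ltW|apply: ltW].
move=> Hkc; apply: mulr_gt0 => //; apply: mulr_gt0 => //; apply: H2 => i hi.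
have := Hkc i hi; lia.
Qed.
Close Scope ring_scope.

Lemma subseq_idx (s1 s2 : seq nat) : subseq s1 s2 ->
  exists f : nat -> nat, forall i, (i < size s1)%N -> (f i < size s2)%N /\ nth 0%N s1 i = nth 0%N s2 (f i).
Proof.
elim: s2 s1 => [|y s2 IH] s1.
  by rewrite subseq0 => /eqP ->; exists id.
case: s1 => [|x s1]; first by move=> _; exists id.
rewrite /=; case: eqP => [->|_] H.
  have [f Hf] := IH _ H; exists (fun i => if i is i'.+1 then (f i').+1 else 0%N).
  by case=> [|i] //= hi; have [? ?] := Hf i hi; split.
have [f Hf] := IH _ H; exists (fun i => (f i).+1) => i hi.
by have [? ?] := Hf i hi; split.
Qed.

Lemma deriv_entry (R : realFieldType) a b :
  (((('X^a : {poly R})^`(b)).[1]) / (b`!)%:R = ('C(a, b))%:R)%R.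
Proof.
rewrite nderivn_def nderivnXn !hornerMn hornerXn expr1n -mulrnA natrM mulfK //.
by rewrite pnatr_eq0 -lt0n fact_gt0.
Qed.

Lemma sorted_inc (s : seq nat) n : sorted ltn s -> size s = n -> inc n (nth 0%N s).
Proof.
move=> Ss sz i hi; apply: (sorted_ltn_nth ltn_trans 0%N Ss) => //; rewrite inE sz //.
exact: ltnW.
Qed.

Theorem corollary2 (R : realFieldType) (m n p : nat) (r c rh ch : seq nat) :
  size r = m.+1 -> size c = n.+1 ->
  sorted ltn r -> sorted ltn c ->
  nth 0 r 0 <= nth 0 c n ->
  ordered_subpair r c rh ch p ->
  \rank (derivA R m p r ch) = p.+1.
Proof.
move=> Hr _ Sr Sc _ [Srh Sch srh sch Hle].
have Srh' : sorted ltn rh by exact: (subseq_sorted ltn_trans Srh Sr).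
have Sch' : sorted ltn ch by exact: (subseq_sorted ltn_trans Sch Sc).
have [f Hf] := subseq_idx _ _ Srh.
set A := derivA R m p r ch.
pose Sel : 'M[R]_(p.+1, m.+1) := (\matrix_(i, l) ((l == inord (f i)) : nat)%:R)%R.
have SPM : ((Sel *m A)^T)%R = PM R p.+1 (nth 0%N rh) (nth 0%N ch).
  apply/matrixP => j i; rewrite !mxE (bigD1 (inord (f i))) //= big1; last first.
    by move=> l /negbTE ne; rewrite !mxE ne mul0r.
  rewrite !mxE eqxx mul1r addr0 deriv_entry inordK; last first.
    by rewrite -Hr; case: (Hf i); rewrite ?srh.
  by case: (Hf i); rewrite ?srh // => _ <-.
have [_ pos] := PM_main R _ _ _ (sorted_inc _ _ Srh' srh) (sorted_inc _ _ Sch' sch).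
have U : ((Sel *m A)%R \in unitmx).
  rewrite unitmxE -det_tr SPM unitfE; apply: lt0r_neq0; apply: pos => i hi.
  exact: Hle.
apply/eqP; rewrite eqn_leq rank_leq_col /=.
by rewrite -{1}(mxrank_unit U) mxrankM_maxr.
Qed.
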